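(* There exist an instance domain $\mathcal{X}$ and a hypothesis class $\mathcal{H}$ consisting of a single hypothesis such that the following holds for all integers $k,l\ge 0$: if $k<l$, then for any integer $m\ge 0$ there exists a strategy of the adversary, all of whose presented sequences satisfy the $l$-bias assumption with respect to $\mathcal{H}$, that forces any deterministic learning algorithm guaranteeing at most $k$ mistakes (on all sequences satisfying the $l$-bias assumption with respect to $\mathcal{H}$) to have at least $m+1$ nontrivial rounds.
   Context: Online classification with abstention: at each round $t$ the adversary presents $x_t\in\mathcal{X}$, the learner predicts $\hat y_t\in\{-1,+1,\bot\}$ ($\bot$ = abstain), then the adversary reveals $y_t\in\{-1,+1\}$. A mistake is a round with $\hat y_t=-y_t$; a round is nontrivial if the learner makes a mistake or abstains on it. A deterministic learner's prediction is a deterministic function of the past labeled examples and the current example; the adversary may choose examples and labels adaptively. Hypotheses are maps $\mathcal{X}\to\{-1,+1\}$. For hypotheses $h_1,h_2$, $h_1\cdot h_2$ is the pointwise product, and for classes $\mathcal{H}_1\cdot\mathcal{H}_2=\{h_1\cdot h_2:h_i\in\mathcal{H}_i\}$. $\mathcal{C}^l$ is the class of functions $x\mapsto 1-2I(x\in D)$ for subsets $D\subseteq\mathcal{X}$ with $|D|\le l$, and $\mathcal{H}^l=\mathcal{H}\cdot\mathcal{C}^l$. A sequence $(x_1,y_1),\dots,(x_n,y_n)$ satisfies the $l$-bias assumption with respect to $\mathcal{H}$ if some $h\in\mathcal{H}^l$ has $h(x_t)=y_t$ for all $t$. An algorithm guarantees at most $k$ mistakes if on every admissible sequence it makes at most $k$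 mistakes. *)

(* Defs.v *)
From mathcomp Require Import all_boot.
Set Implicit Arguments. Unset Strict Implicit. Unset Printing Implicit Defensive.

(* Labels {-1,+1} are encoded as bool: true = +1, false = -1.
   Predictions {-1,+1,bot} are encoded as option bool: None = abstain (bot). *)

Section Online.
Variable X : eqType.

Definition hyp := X -> bool.

Definition learner := seq (X * bool) -> X -> option bool.

(* l-bias assumption w.r.t. the class H = {h0}: some h in H^l = H . C^l,
   i.e. h = h0 * c_D with |D| <= l (c_D x = -1 iff x in D), is consistent
   with the sequence.  Since (h0 * c_D)(x) = -h0(x) for x in D and h0(x)
   otherwise, in the bool encoding this is: *)
Definition prod_CD (h0 : hyp) (D : seq X) : hyp :=
  fun x => if x \in D then ~~ h0 x else h0 x.

Definition lbias (l : nat) (h0 : hyp) (s : seq (X * bool)) : Prop :=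
  exists D : seq X, size D <= l /\ all (fun xy => prod_CD h0 D xy.1 == xy.2) s.

Fixpoint transcript (L : learner) (past : seq (X * bool)) (s : seq (X * bool))
  : seq (X * bool * option bool) :=
  match s with
  | [::] => [::]
  | (x, y) :: s' => (x, y, L past x) :: transcript L (rcons past (x, y)) s'
  end.

Definition is_mistake (r : X * bool * option bool) : bool :=
  r.2 == Some (~~ r.1.2).

Definition is_nontrivial (r : X * bool * option bool) : bool :=
  r.2 != Some r.1.2.

Definition mistakes (L : learner) (s : seq (X * bool)) : nat :=
  count is_mistake (transcript L [::] s).

Definition guarantees (k l : nat) (h0 : hyp) (L : learner) : Prop :=
  forall s : seq (X * bool), lbias l h0 s -> mistakes L s <= k.

(* It sees the full history
   (examples, labels and the learner's predictions), chooses whether to stop,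
   the next example, and -- after seeing the learner's prediction -- the label.
   adv_bound is an a-priori bound on the number of rounds (finite interaction). *)
Record adversary := Adversary {
  adv_bound : nat;
  adv_stop  : seq (X * bool * option bool) -> bool;
  adv_x     : seq (X * bool * option bool) -> X;
  adv_y     : seq (X * bool * option bool) -> X -> option bool -> bool
}.

Definition unlabel (r : X * bool * option bool) : X * bool := r.1.

Fixpoint run_aux (A : adversary) (L : learner) (fuel : nat)
  (hist : seq (X * bool * option bool)) : seq (X * bool * option bool) :=
  match fuel with
  | 0 => hist
  | S f =>
    if adv_stop A hist then hist else
    let x := adv_x A hist in
    let p := L (map unlabel hist) x in
    let y := adv_y A hist x p in
    run_aux A L f (rcons hist (x, y, p))
  end.

Definition run (A : adversary) (L : learner) : seq (X * bool * option bool) :=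
  run_aux A L (adv_bound A) [::].

Definition nontrivial_rounds (A : adversary) (L : learner) : nat :=
  count is_nontrivial (run A L).

End Online.

(* Main.v *)
Require Import Defs.
From mathcomp Require Import all_boot zify.

Definition R := (nat * bool * option bool)%type.
Definition flips (h : seq R) := count (fun r : R => ~~ r.1.2) h.

Definition advy (l : nat) (h : seq R) (x : nat) (p : option bool) : bool :=
  ~~ ((p == Some true) && (flips h < l)).

Definition adv (l m : nat) : adversary nat :=
  Adversary m.+1 (fun _ => false) (fun h => size h) (advy l).

Definition Inv (l : nat) (h : seq R) : Prop :=
  [/\ map (fun r : R => r.1.1) h = iota 0 (size h), flips h <= l,
      flips h <= count (@is_mistake nat) h &
      (has (fun r => ~~ @is_nontrivial nat r) h -> l <= flips h)].

Lemma inv_step l L h : Inv l h ->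
  Inv l (rcons h (size h, advy l h (size h) (L (map (@unlabel _) h) (size h)),
                  L (map (@unlabel _) h) (size h))).
Proof.
case=> Hx Hf Hm Hn.
set p := L _ _.
rewrite /Inv -!cats1 /flips !count_cat has_cat map_cat size_cat Hx iotaD /=.
rewrite -/(flips h) in Hf Hm Hn *.
rewrite /advy; rewrite /is_mistake in Hm.
case: (ltnP (flips h) l) => H;
  case: p => [[]|] /=; rewrite /is_mistake /is_nontrivial /= ?addn0 ?orbF;
  split => //; try lia; try (move=> /Hn; lia); try by rewrite leq_add2r.
all: by rewrite addn1; apply: leqW.
Qed.

Lemma run_inv l m L f h : Inv l h -> Inv l (run_aux (adv l m) L f h).
Proof.
elim: f h => [//|f IH] h Hh /=.
by apply: IH; apply: inv_step.
Qed.

Lemma run_size l m L f h : size (run_aux (adv l m) L f h) = size h + f.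
Proof.
elim: f h => [|f IH] h /=; first by rewrite addn0.
by rewrite IH size_rcons addSnnS.
Qed.


Lemma run_trans l m L f h : exists t, run_aux (adv l m) L f h = h ++ t /\
  transcript L (map (@unlabel _) h) (map (@unlabel _) t) = t.
Proof.
elim: f h => [|f IH] h /=; first by exists [::]; rewrite cats0.
have [t [-> Ht]] := IH (rcons h (size h, advy l h (size h) (L (map (@unlabel _) h) (size h)),
                  L (map (@unlabel _) h) (size h))).
eexists; split; first by rewrite -cats1 -catA cat1s.
by rewrite /= map_rcons in Ht *; rewrite Ht.
Qed.

Lemma mem_flipD (s : seq R) : uniq (map (fun r : R => r.1.1) s) ->
  forall r, r \in s -> (r.1.1 \in [seq x.1.1 | x <- s & ~~ x.1.2]) = ~~ r.1.2.
Proof.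
elim: s => [//|a s IH] /= /andP [Ha Hu] r.
rewrite in_cons => /orP [/eqP ->|Hr].
  case: (a.1.2) => /=; last by rewrite in_cons eqxx.
  apply/negP => /mapP [x]; rewrite mem_filter => /andP [_ Hx] E.
  by move/negP: Ha; apply; apply/mapP; exists x.
have Hne : r.1.1 != a.1.1.
  apply/eqP => E; move/negP: Ha; apply; apply/mapP; exists r => //.
case: (a.1.2) => /=; first exact: IH.
by rewrite in_cons (negbTE Hne) /= IH.
Qed.

Theorem mainTheorem1 :
  exists (X : eqType) (h0 : X -> bool),
  forall k l : nat, k < l ->
  forall m : nat,
  exists A : adversary X,
    (forall L : learner X, lbias l h0 (map (@unlabel X) (run A L))) /\
    (forall L : learner X, guarantees k l h0 L ->
       m.+1 <= nontrivial_rounds A L).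
Proof.
exists nat, (fun _ => true) => k l Hkl m.
exists (adv l m).
have Hinv : forall L, Inv l (run (adv l m) L).
  by move=> L; apply: run_inv; split.
have Hlb : forall L : learner nat, lbias l (fun _ => true) (map (@unlabel nat) (run (adv l m) L)).
  move=> L; have [Hx Hf _ _] := Hinv L.
  exists [seq x.1.1 | x <- run (adv l m) L & ~~ x.1.2]; split.
    by rewrite size_map size_filter.
  rewrite all_map; apply/allP => r Hr /=.
  rewrite /prod_CD mem_flipD //; last by rewrite Hx iota_uniq.
  by case: (r.1.2).
split => // L HL.
have Hm := HL _ (Hlb L).
have [t [Ht Htr]] := run_trans l m L (adv_bound (adv l m)) [::].
rewrite /mistakes /= in Hm.
rewrite /run in Hinv Hlb.
have [_ _ Hfm Hn] := Hinv L.
rewrite /run Ht /= in Hfm Hn Hm.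
rewrite Htr in Hm.
have Hall : all (@is_nontrivial nat) t.
  apply/negPn/negP; rewrite -has_predC => /Hn; lia.
rewrite /nontrivial_rounds /run Ht /=.
move/allP: Hall => Hall.
rewrite (eq_in_count (a2 := predT)) ?count_predT; last by move=> x /Hall.
have := run_size l m L m.+1 [::]; rewrite Ht /= => ->.
by [].
Qed.
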